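(* Let $H\subseteq\mathbb N$ be a numerical semigroup, $k$ an infinite field, $R=k[[H]]\subseteq k[[t]]$. Write $H=\{a_0=0<a_1<a_2<\cdots\}$, let $n$ be the smallest integer with $a_{n+i}=a_n+i$ for all $i\ge 0$, and assume $n=4$. Then the following are equivalent: (1) $\mathcal T(R)$ is finite; (2) $\mathcal T(R)=\mathcal I(R)$; (3) $a_2-a_1\ge a_4-a_3$.
   Context: $v$ is the $t$-adic order; $I_i=\{r\in R\mid v(r)\ge a_i\}$ for $0\le i\le n$ and $\mathcal I(R)=\{I_0,\dots,I_n\}$. $\mathcal T(R)$ is the set of nonzero trace ideals of $R$, where a trace ideal is one of the form $\sum_{f\in\mathrm{Hom}_R(M,R)}\mathrm{Im}f$ for some $R$-module $M$. *)

(* Defs.v *)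
From HB Require Import structures.
From mathcomp Require Import all_boot all_order all_algebra.
Set Implicit Arguments. Unset Strict Implicit. Unset Printing Implicit Defensive.
Import Order.TTheory GRing.Theory.
Local Open Scope ring_scope.

Definition numerical_semigroup (H : pred nat) : Prop :=
  [/\ H 0%N, (forall x y, H x -> H y -> H (x + y)%N) &
      exists N : nat, forall m, (N <= m)%N -> H m].

Definition enumerates (H : pred nat) (a : nat -> nat) : Prop :=
  (forall i, (a i < a i.+1)%N) /\ (forall x, H x <-> exists i, a i = x).

Definition stable_from (a : nat -> nat) (m : nat) : Prop :=
  forall i, a (m + i)%N = (a m + i)%N.
Definition conductor_index (a : nat -> nat) (n : nat) : Prop :=
  stable_from a n /\ forall m, stable_from a m -> (n <= m)%N.

Definition infinite_field (k : fieldType) : Prop :=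
  forall s : seq k, exists x : k, x \notin s.

Definition ps (k : fieldType) := nat -> k.
Definition psadd (k : fieldType) (f g : ps k) : ps k := fun n => f n + g n.
Definition psmul (k : fieldType) (f g : ps k) : ps k :=
  fun n => \sum_(i < n.+1) f i * g (n - i)%N.
Definition ps1 (k : fieldType) : ps k := fun n => if n == 0%N then 1 else 0.

(* R = k[[H]]: power series supported on H. *)
Definition inR (k : fieldType) (H : pred nat) (f : ps k) : Prop :=
  forall n, f n != 0 -> H n.

Definition is_module (k : fieldType) (H : pred nat) (M : zmodType)
  (act : ps k -> M -> M) : Prop :=
  [/\ forall r x y, inR H r -> act r (x + y) = act r x + act r y,
      forall r s x, inR H r -> inR H s -> act (psadd r s) x = act r x + act s x,
      forall r s x, inR H r -> inR H s -> act (psmul r s) x = act r (act s x) &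
      forall x, act (ps1 k) x = x].

Definition is_hom (k : fieldType) (H : pred nat) (M : zmodType)
  (act : ps k -> M -> M) (f : M -> ps k) : Prop :=
  [/\ forall x, inR H (f x),
      forall x y n, f (x + y) n = f x n + f y n &
      forall r x n, inR H r -> f (act r x) n = psmul r (f x) n].

Definition in_trace (k : fieldType) (H : pred nat) (M : zmodType)
  (act : ps k -> M -> M) (z : ps k) : Prop :=
  exists s : seq ((M -> ps k) * M),
    (forall j, (j < size s)%N -> is_hom H act (nth (fun _ _ => 0, 0) s j).1) /\
    forall n, z n = \sum_(p <- s) p.1 p.2 n.

(* Ideals of R are represented as predicates on k[[t]], compared extensionally. *)
Definition same_ideal (k : fieldType) (I J : ps k -> Prop) : Prop :=
  forall z, I z <-> J z.

Definition is_trace_ideal (k : fieldType) (H : pred nat) (I : ps k -> Prop) : Prop :=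
  exists (M : zmodType) (act : ps k -> M -> M),
    is_module H act /\ forall z, I z <-> in_trace H act z.

Definition nonzero_ideal (k : fieldType) (I : ps k -> Prop) : Prop :=
  exists z, I z /\ exists n, z n != 0.

Definition in_T (k : fieldType) (H : pred nat) (I : ps k -> Prop) : Prop :=
  is_trace_ideal H I /\ nonzero_ideal I.

Definition I_ideal (k : fieldType) (H : pred nat) (a : nat -> nat) (i : nat) : ps k -> Prop :=
  fun r => inR H r /\ forall m, (m < a i)%N -> r m = 0.

Definition T_finite (k : fieldType) (H : pred nat) : Prop :=
  exists (N : nat) (J : nat -> ps k -> Prop),
    forall I : ps k -> Prop, in_T H I -> exists j, (j < N)%N /\ same_ideal I (J j).

Definition T_eq_I (k : fieldType) (H : pred nat) (a : nat -> nat) (n : nat) : Prop :=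
  (forall I : ps k -> Prop, in_T H I -> exists i, (i <= n)%N /\ same_ideal I (I_ideal H a i)) /\
  (forall i, (i <= n)%N -> in_T H (@I_ideal k H a i)).

(* Main.v *)
Require Import Defs.
From HB Require Import structures.
From mathcomp Require Import all_boot all_order all_algebra.
From mathcomp.classical Require Import boolp.
From Stdlib Require Import FunctionalExtensionality ProofIrrelevance.
From mathcomp Require Import zify ring.
Set Implicit Arguments. Unset Strict Implicit. Unset Printing Implicit Defensive.
Import Order.TTheory GRing.Theory.
Local Open Scope ring_scope.

Section PS.
Variable k : fieldType.
Implicit Types f g h : ps k.

Definition tr n f : {poly k} := \poly_(i < n.+1) f i.
Definition shift (m : nat) f : ps k := fun n => if (m <= n)%N then f (n - m)%N else 0.
Definition down (m : nat) f : ps k := fun n => f (n + m)%N.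
Definition mono (m : nat) : ps k := fun n => if n == m then 1 else 0.
Definition psscale (x : k) f : ps k := fun n => x * f n.
Definition psopp f : ps k := fun n => - f n.
Definition ps0 : ps k := fun _ => 0.

Lemma psmul_poly f g (p q : {poly k}) n :
  (forall i, (i <= n)%N -> p`_i = f i) -> (forall i, (i <= n)%N -> q`_i = g i) ->
  psmul f g n = (p * q)`_n.
Proof.
move=> Hp Hq; rewrite /psmul coefM; apply: eq_bigr => i _.
by rewrite Hp ?Hq // ?leq_subr // -ltnS.
Qed.

Lemma tr_coef n f i : (i <= n)%N -> (tr n f)`_i = f i.
Proof. by move=> hi; rewrite coef_poly ltnS hi. Qed.

Lemma psmulE f g n : psmul f g n = (tr n f * tr n g)`_n.
Proof. by apply: psmul_poly => i hi; rewrite tr_coef. Qed.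

Lemma psmulC f g : psmul f g = psmul g f.
Proof. by apply: functional_extensionality => n; rewrite !psmulE mulrC. Qed.

Lemma psmulA f g h : psmul f (psmul g h) = psmul (psmul f g) h.
Proof.
apply: functional_extensionality => n.
rewrite (@psmul_poly _ _ (tr n f) (tr n g * tr n h)); last first.
  move=> i hi; symmetry; apply: psmul_poly => j hj; rewrite tr_coef //; exact: leq_trans hj hi.
  by move=> i hi; rewrite tr_coef.
rewrite (@psmul_poly _ _ (tr n f * tr n g) (tr n h)) ?mulrA //; last first.
  by move=> i hi; rewrite tr_coef.
move=> i hi; symmetry; apply: psmul_poly => j hj; rewrite tr_coef //; exact: leq_trans hj hi.
Qed.

Lemma psmulDr f g h : psmul f (psadd g h) = psadd (psmul f g) (psmul f h).
Proof.
apply: functional_extensionality => n.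
rewrite (@psmul_poly _ _ (tr n f) (tr n g + tr n h)) ?mulrDr ?coefD -?psmulE //.
  by move=> i hi; rewrite tr_coef.
by move=> i hi; rewrite coefD !tr_coef.
Qed.

Lemma psmulDl f g h : psmul (psadd g h) f = psadd (psmul g f) (psmul h f).
Proof. by rewrite psmulC psmulDr !(psmulC f). Qed.

Lemma psmulZr x f g : psmul f (psscale x g) = psscale x (psmul f g).
Proof.
apply: functional_extensionality => n; rewrite /psscale /psmul mulr_sumr.
by apply: eq_bigr => i _; rewrite mulrCA.
Qed.

Lemma psmulZl x f g : psmul (psscale x g) f = psscale x (psmul g f).
Proof. by rewrite psmulC psmulZr psmulC. Qed.

Lemma psmul1l f : psmul (ps1 k) f = f.
Proof.
apply: functional_extensionality => n; rewrite /psmul big_ord_recl /ps1 /=.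
by rewrite big1 ?addr0 ?mul1r ?subn0 // => i _; rewrite mul0r.
Qed.

Lemma psmul1r f : psmul f (ps1 k) = f.
Proof. by rewrite psmulC psmul1l. Qed.

Lemma psmul0r f : psmul ps0 f = ps0.
Proof. by apply: functional_extensionality => n; rewrite /psmul big1 // => i _; rewrite mul0r. Qed.

Lemma psmul_shiftl m f g : psmul (shift m f) g = shift m (psmul f g).
Proof.
apply: functional_extensionality => n.
rewrite (@psmul_poly _ _ ('X^m * tr n f) (tr n g)); last 2 first.
- move=> i hi; rewrite coefXnM /shift; case: ltnP => hm //.
  by rewrite tr_coef // (leq_trans (leq_subr _ _) hi).
- by move=> i hi; rewrite tr_coef.
rewrite -mulrA coefXnM /shift; case: ltnP => hm //.
symmetry; apply: psmul_poly => i hi; rewrite tr_coef //.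
  exact: leq_trans hi (leq_subr _ _).
exact: leq_trans hi (leq_subr _ _).
Qed.

Lemma psmul_shiftr m f g : psmul g (shift m f) = shift m (psmul g f).
Proof. by rewrite psmulC psmul_shiftl psmulC. Qed.

Lemma mono_shift m : mono m = shift m (ps1 k).
Proof.
apply: functional_extensionality => n; rewrite /mono /shift /ps1.
case: (ltngtP n m) => h //.
- by rewrite subn_eq0 leqNgt h.
- by rewrite h subnn.
Qed.

Lemma psmul_mono m f : psmul (mono m) f = shift m f.
Proof. by rewrite mono_shift psmul_shiftl psmul1l. Qed.

Lemma down_shift m f : down m (shift m f) = f.
Proof.
by apply: functional_extensionality => n; rewrite /down /shift leq_addl addnK.
Qed.

Lemma shift_down m f : (forall n, (n < m)%N -> f n = 0) -> shift m (down m f) = f.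
Proof.
move=> hf; apply: functional_extensionality => n; rewrite /down /shift.
case: leqP => h; first by rewrite subnK.
by rewrite hf.
Qed.

Lemma shift_shift m p f : shift m (shift p f) = shift (m + p) f.
Proof.
apply: functional_extensionality => n; rewrite /shift.
case: (leqP m n) => h1; case: (leqP (m + p) n) => h3; rewrite ?subnDA //.
- by case: leqP => // h2; exfalso; lia.
- by case: leqP => // h2; exfalso; lia.
- exfalso; lia.
Qed.

Lemma psmul_low f g al be n :
  (forall i, (i < al)%N -> f i = 0) -> (forall j, (j < be)%N -> g j = 0) ->
  (n < al + be)%N -> psmul f g n = 0.
Proof.
move=> hf hg hn; rewrite /psmul big1 // => i _.
case: (ltnP i al) => hi; first by rewrite hf ?mul0r.
rewrite hg ?mulr0 //.
have := ltn_ord i; lia.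
Qed.
End PS.

Section Inv.
Variable k : fieldType.
Variables (u w : ps k).
Fixpoint solF (n : nat) : nat -> k := match n with
| 0 => fun j => w 0%N / u 0%N
| n'.+1 => let h := solF n' in
   fun j => if (j <= n')%N then h j
            else (w n'.+1 - \sum_(i < n'.+1) u i.+1 * h (n' - i)%N) / u 0%N end.
Definition sol : ps k := fun j => solF j j.
Lemma solF_sol n j : (j <= n)%N -> solF n j = sol j.
Proof.
elim: n j => [|n IH] j hj; first by move: hj; rewrite leqn0 => /eqP ->.
rewrite /=; case: leqP => h; first exact: IH.
have -> : j = n.+1 by lia.
by rewrite /sol /= ltnn.
Qed.
Lemma sol_spec : u 0%N != 0 -> psmul u sol = w.
Proof.
move=> hu; apply: functional_extensionality => n; rewrite /psmul.
case: n => [|n]; first by rewrite big_ord1 /sol /= mulrC divfK.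
rewrite big_ord_recl subn0 {1}/sol /= ltnn.
rewrite mulrC divfK //.
rewrite [X in _ + X](eq_bigr (fun i : 'I_n.+1 => u i.+1 * solF n (n - i)%N)); first by rewrite subrK.
move=> i _; rewrite solF_sol ?leq_subr //; congr (_ * sol _).
Qed.
End Inv.

Section RFacts.
Variable k : fieldType.
Variable H : pred nat.
Hypothesis HH : numerical_semigroup H.

Lemma inR_mul (r s : ps k) : inR H r -> inR H s -> inR H (psmul r s).
Proof.
case: HH => H0 Hadd _ hr hs n; rewrite /psmul => hn.
have [i hi] : exists i : 'I_n.+1, r i * s (n - i)%N != 0.
  apply/existsP; apply: contraNT hn; rewrite negb_exists => /forallP hall.
  by apply/eqP; rewrite big1 // => i _; apply/eqP; move: (hall i); rewrite negbK.
move: hi; rewrite mulf_eq0 negb_or => /andP [/hr h1 /hs h2].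
by have := Hadd _ _ h1 h2; rewrite subnKC // -ltnS.
Qed.

Lemma inR_add (r s : ps k) : inR H r -> inR H s -> inR H (psadd r s).
Proof.
move=> hr hs n; rewrite /psadd => hn.
case: (eqVneq (r n) 0) => h; last exact: hr.
by apply: hs; move: hn; rewrite h add0r.
Qed.

Lemma inR_scale x (r : ps k) : inR H r -> inR H (psscale x r).
Proof. by move=> hr n; rewrite /psscale mulf_eq0 negb_or => /andP [_ /hr]. Qed.

Lemma inR_opp (r : ps k) : inR H r -> inR H (psopp r).
Proof. by move=> hr n; rewrite /psopp oppr_eq0 => /hr. Qed.

Lemma inR_0 : inR H (@ps0 k).
Proof. by move=> n; rewrite /ps0 eqxx. Qed.

Lemma inR_1 : inR H (ps1 k).
Proof. by case: HH => H0 _ _ n; rewrite /ps1; case: (eqVneq n 0%N) => [->|] //; rewrite eqxx. Qed.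

Definition projR (r : ps k) : ps k := fun n => if H n then r n else 0.
Lemma inR_projR r : inR H (projR r).
Proof. by move=> n; rewrite /projR; case: (H n) => //; rewrite eqxx. Qed.
Lemma projR_id r : inR H r -> projR r = r.
Proof.
move=> hr; apply: functional_extensionality => n; rewrite /projR.
case hn: (H n) => //; case: (eqVneq (r n) 0) => // /hr; by rewrite hn.
Qed.
End RFacts.

Record idealp (k : fieldType) (H : pred nat) := IdealP {
  ip : ps k -> Prop;
  ip0 : ip (@ps0 k);
  ipadd : forall x y, ip x -> ip y -> ip (psadd x y);
  ipopp : forall x, ip x -> ip (psopp x);
  ipmul : forall r x, inR H r -> ip x -> ip (psmul r x);
  ipR : forall x, ip x -> inR H x }.

Record sub (k : fieldType) (H : pred nat) (I : idealp k H) := MkSub { sv : ps k; sP : ip I sv }.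

Section SubMod.
Variable k : fieldType.
Variable H : pred nat.
Variable I : idealp k H.

Lemma sub_inj (x y : sub I) : sv x = sv y -> x = y.
Proof.
case: x => x hx; case: y => y hy /= exy; subst y.
by rewrite (proof_irrelevance _ hx hy).
Qed.

HB.instance Definition _ := gen_eqMixin (sub I).
HB.instance Definition _ := gen_choiceMixin (sub I).

Definition szero : sub I := MkSub (ip0 I).
Definition sopp (x : sub I) : sub I := MkSub (ipopp (sP x)).
Definition sadd (x y : sub I) : sub I := MkSub (ipadd (sP x) (sP y)).

Lemma saddA : associative sadd.
Proof.
move=> x y z; apply: sub_inj; apply: functional_extensionality => n.
by rewrite /= /psadd addrA.
Qed.
Lemma saddC : commutative sadd.
Proof.
move=> x y; apply: sub_inj; apply: functional_extensionality => n.
by rewrite /= /psadd addrC.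
Qed.
Lemma sadd0 : left_id szero sadd.
Proof.
move=> x; apply: sub_inj; apply: functional_extensionality => n.
by rewrite /= /psadd /ps0 add0r.
Qed.
Lemma saddN : left_inverse szero sopp sadd.
Proof.
move=> x; apply: sub_inj; apply: functional_extensionality => n.
by rewrite /= /psadd /psopp /ps0 addNr.
Qed.

HB.instance Definition _ := GRing.isZmodule.Build (sub I) saddA saddC sadd0 saddN.

Definition sact (r : ps k) (x : sub I) : sub I := MkSub (ipmul (@inR_projR k H r) (sP x)).

Lemma sv_add (x y : sub I) : sv (x + y) = psadd (sv x) (sv y).
Proof. by []. Qed.

Lemma sub_module : numerical_semigroup H -> is_module H sact.
Proof.
move=> HH; split.
- move=> r x y hr; apply: sub_inj; rewrite /= psmulDr //.
- move=> r s x hr hs; apply: sub_inj; rewrite /= (projR_id (inR_add hr hs)).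
  by rewrite (projR_id hr) (projR_id hs) psmulDl.
- move=> r s x hr hs; apply: sub_inj; rewrite /= (projR_id (inR_mul HH hr hs)).
  by rewrite (projR_id hr) (projR_id hs) psmulA.
- move=> x; apply: sub_inj; rewrite /= (projR_id (@inR_1 k H HH)) psmul1l //.
Qed.

Lemma sv_hom : is_hom H sact (@sv _ _ I).
Proof.
split.
- by move=> x; apply: ipR (sP x).
- by [].
- by move=> r x n hr; rewrite /= projR_id.
Qed.
End SubMod.

Section HomMult.
Variable k : fieldType.
Variable H : pred nat.
Hypothesis HH : numerical_semigroup H.
Variable I : idealp k H.
Variable c : nat.
Hypothesis hc0 : (0 < c)%N.
Hypothesis hc1 : ~~ H c.-1.
Hypothesis hmono : forall m, (c <= m)%N -> ip I (mono k m).

Lemma shift_coef m (f : ps k) n : shift m f (m + n)%N = f n.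
Proof. by rewrite /shift leq_addr addKn. Qed.

Lemma hom_mult (f : sub I -> ps k) : is_hom H (@sact k H I) f ->
  exists q, forall x : sub I, f x = psmul q (sv x).
Proof.
case=> fR fadd fmul.
pose u : sub I := MkSub (hmono (leqnn c)).
pose F := f u.
have key : forall x : sub I, shift c (f x) = psmul (sv x) F.
  move=> x; apply: functional_extensionality => n.
  have e : sact (sv x) u = sact (mono k c) x.
    apply: sub_inj => /=; rewrite (projR_id (ipR (sP x))).
    by rewrite (projR_id (ipR (hmono (leqnn c)))) psmulC.
  have := fmul (sv x) u n (ipR (sP x)); rewrite e => <-.
  by rewrite fmul ?psmul_mono //; apply: ipR (hmono (leqnn c)).
have F0 : forall n, (n < c)%N -> F n = 0.
  move=> n hn; apply/eqP; apply: contraT => hF.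
  have ex : exists n, F n != 0 by exists n.
  case: (ex_minnP ex) => w hw wmin.
  have hwc : (w < c)%N by apply: leq_ltn_trans (wmin _ hF) hn.
  have hm : (c <= (c + c.-1 - w))%N by lia.
  pose x : sub I := MkSub (hmono hm).
  have := congr1 (fun g => g (c + c.-1)%N) (key x).
  rewrite /= (shift_coef c (f x) c.-1) psmul_mono.
  have -> : shift (c + c.-1 - w) F (c + c.-1) = F w.
    by rewrite /shift ifT; [congr F; lia | lia].
  move=> e.
  move: (fR x c.-1); rewrite e => /(_ hw); by rewrite (negbTE hc1).
exists (down c F) => x.
rewrite psmulC -[f x](down_shift c) key -{1}(shift_down F0) psmul_shiftr.
by rewrite down_shift.
Qed.
End HomMult.

Section Trace.
Variable k : fieldType.
Variable H : pred nat.
Variable M : zmodType.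
Variable act : ps k -> M -> M.

Lemma psmul_sum (T : Type) (g : ps k) (s : seq T) (F : T -> ps k) :
  psmul g (fun n => \sum_(p <- s) F p n) = fun n => \sum_(p <- s) psmul g (F p) n.
Proof.
apply: functional_extensionality => n; rewrite /psmul.
under eq_bigr => i _ do rewrite mulr_sumr.
by rewrite exchange_big.
Qed.

Lemma in_trace_single (f : M -> ps k) x : is_hom H act f -> in_trace H act (f x).
Proof.
move=> hf; exists [:: (f, x)]; split.
  by case=> // _; exact: hf.
by move=> n; rewrite big_seq1.
Qed.

Lemma in_traceR z : in_trace H act z -> inR H z.
Proof.
case=> s [hs hz] n; rewrite hz => hn.
have [j hj] : exists j : 'I_(size s), (nth (fun _ _ => 0, 0) s j).1 (nth (fun _ _ => 0, 0) s j).2 n != 0.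
  apply/existsP; apply: contraNT hn; rewrite negb_exists => /forallP hall.
  rewrite (big_nth (fun _ _ => 0, 0)) big_mkord; apply/eqP; rewrite big1 // => i _.
  by apply/eqP; move: (hall i); rewrite negbK.
by case: (hs j (ltn_ord j)) => hR _ _; exact: (hR _ n hj).
Qed.

Lemma in_trace_add z1 z2 : in_trace H act z1 -> in_trace H act z2 ->
  in_trace H act (psadd z1 z2).
Proof.
case=> s1 [hs1 hz1] [s2 [hs2 hz2]]; exists (s1 ++ s2); split.
  move=> j hj; rewrite size_cat in hj; rewrite nth_cat; case: ltnP => hj2; first exact: hs1.
  by apply: hs2; rewrite ltn_subLR.
by move=> n; rewrite /psadd big_cat hz1 hz2.
Qed.

Lemma trace_closure (g : ps k) (s : nat) :
  (forall x, in_trace H act x ->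
     (forall n, (n < s)%N -> psmul g x n = 0) /\ inR H (down s (psmul g x))) ->
  forall z, in_trace H act z -> in_trace H act (down s (psmul g z)).
Proof.
move=> hyp z [sl [hsl hz]].
pose F (p : (M -> ps k) * M) := ((fun x => down s (psmul g (p.1 x))), p.2).
exists (map F sl); split.
  move=> j; rewrite size_map => hj.
  rewrite (nth_map (fun _ _ => 0, 0)) //=.
  move: (hsl j hj); set f := (nth _ _ _).1 => hf.
  have [fR fadd fmul] := hf.
  split.
  - move=> x; exact: (proj2 (hyp _ (in_trace_single x hf))).
  - move=> x y n; rewrite /down.
    have -> : f (x + y) = psadd (f x) (f y).
      by apply: functional_extensionality => m; rewrite fadd.
    by rewrite psmulDr.
  - move=> r x n hr.
    have -> : f (act r x) = psmul r (f x).
      by apply: functional_extensionality => m; rewrite fmul.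
    have h0 := proj1 (hyp _ (in_trace_single x hf)).
    rewrite psmulA (psmulC g) -psmulA -(shift_down h0) psmul_shiftr down_shift.
    rewrite shift_down //.
have -> : z = fun n => \sum_(p <- sl) p.1 p.2 n by apply: functional_extensionality.
move=> n; rewrite psmul_sum /down big_map /=.
by [].
Qed.
End Trace.

Lemma ex_min (P : nat -> Prop) : (exists n, P n) -> exists n, P n /\ forall m, P m -> (n <= m)%N.
Proof.
move=> [n hn]; elim/ltn_ind: n hn => n IH hn.
case: (lem (exists m, (m < n)%N /\ P m)) => [[m [hm pm]] | hno]; first exact: IH m hm pm.
exists n; split => // m pm; rewrite leqNgt; apply/negP => hmn; apply: hno; exists m; by split.
Qed.

Section Semi.
Variable H : pred nat.
Hypothesis HH : numerical_semigroup H.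
Variable a : nat -> nat.
Hypothesis Ha : enumerates H a.
Hypothesis Hn : conductor_index a 4.

Lemma a_lt i j : (i < j)%N -> (a i < a j)%N.
Proof.
case: Ha => inc _; elim: j => // j IH; rewrite ltnS leq_eqVlt => /orP [/eqP -> | h].
  exact: inc.
exact: ltn_trans (IH h) (inc j).
Qed.

Lemma a_lt_inv i j : (a i < a j)%N -> (i < j)%N.
Proof.
move=> h; rewrite ltnNge; apply/negP => hji.
move: hji; rewrite leq_eqVlt => /orP [/eqP e | /a_lt]; first by move: h; rewrite e ltnn.
by move=> h2; move: (ltn_trans h h2); rewrite ltnn.
Qed.

Lemma Hai i : H (a i).
Proof. by case: Ha => _ e; apply/e; exists i. Qed.

Lemma a0 : a 0 = 0%N.
Proof.
case: HH => H0 _ _; case: Ha => _ e; case: (proj1 (e 0%N) H0) => i hi.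
by case: i hi => // i hi; move: (a_lt (ltn0Sn i)); rewrite hi.
Qed.

Lemma gapH i n : (a i < n)%N -> (n < a i.+1)%N -> ~~ H n.
Proof.
move=> h1 h2; apply/negP => hn; case: Ha => _ e; case: (proj1 (e n) hn) => j hj.
subst n; move: (a_lt_inv h1) (a_lt_inv h2); lia.
Qed.

Lemma Hge n : (a 4 <= n)%N -> H n.
Proof.
case: Hn => st _ hn; rewrite -(subnKC hn) -(st (n - a 4)%N); exact: Hai.
Qed.

Lemma a34 : ((a 3).+1 < a 4)%N.
Proof.
case: Hn => st mn; have h := a_lt (ltnSn 3).
rewrite ltn_neqAle h andbT; apply/negP => /eqP e.
have : stable_from a 3.
  rewrite /stable_from => i; case: i => [|i]; first by rewrite !addn0.
  by rewrite (_ : (3 + i.+1 = 4 + i)%N) // (st i) -e; lia.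
by move/mn.
Qed.

Lemma hc1 : ~~ H (a 4).-1.
Proof. apply: (@gapH 3); have := a34; lia. Qed.

Lemma hc0 : (0 < a 4)%N.
Proof. by have := a34; lia. Qed.

Lemma Hcases n : H n -> n = 0%N \/ n = a 1 \/ n = a 2 \/ n = a 3 \/ (a 4 <= n)%N.
Proof.
move=> hn; case: Ha => _ e; case: (proj1 (e n) hn) => j <-.
case: j => [|[|[|[|j]]]]; rewrite ?a0; try by [left|right;left|right;right;left|right;right;right;left].
right; right; right; right; case: (ltnP 0 j) => hj; last by have -> : j = 0%N by lia.
exact: ltnW (a_lt _).
Qed.

Lemma Hadd x y : H x -> H y -> H (x + y)%N.
Proof. by case: HH => _ h _; exact: h. Qed.

Lemma a_mono i j : (i <= j)%N -> (a i <= a j)%N.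
Proof. rewrite leq_eqVlt => /orP [/eqP -> // | /a_lt /ltnW //]. Qed.

End Semi.

Section SubTrace.
Variable k : fieldType.
Variable H : pred nat.
Hypothesis HH : numerical_semigroup H.
Variable I : idealp k H.
Variable c : nat.
Hypothesis hc0 : (0 < c)%N.
Hypothesis hc1 : ~~ H c.-1.
Hypothesis hmono : forall m, (c <= m)%N -> ip I (mono k m).

Lemma trace_sub_in (Q : ps k -> Prop) :
  Q (@ps0 k) -> (forall x y, Q x -> Q y -> Q (psadd x y)) ->
  (forall q, (forall x, ip I x -> inR H (psmul q x)) -> forall x, ip I x -> Q (psmul q x)) ->
  forall z, in_trace H (@sact k H I) z -> Q z.
Proof.
move=> Q0 Qadd Qmul z [s [hs hz]].
have -> : z = fun n => \sum_(p <- s) p.1 p.2 n by apply: functional_extensionality.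
elim: s hs {hz} => [|p s IH] hs.
  rewrite [X in Q X](_ : _ = @ps0 k) //.
  by apply: functional_extensionality => n; rewrite big_nil.
have -> : (fun n => \sum_(p0 <- p :: s) p0.1 p0.2 n) =
          psadd (p.1 p.2) (fun n => \sum_(p0 <- s) p0.1 p0.2 n).
  by apply: functional_extensionality => n; rewrite big_cons.
apply: Qadd; last by apply: IH => j hj; exact: (hs j.+1 hj).
have hp := hs 0%N (ltn0Sn _); rewrite /= in hp.
case: (hom_mult hc0 hc1 hmono hp) => q hq.
rewrite hq; apply: Qmul; last exact: sP.
move=> x hx; have := (let: And3 fR _ _ := hp in fR) (MkSub hx).
by rewrite hq.
Qed.

Lemma in_T_sub :
  (forall q, (forall x, ip I x -> inR H (psmul q x)) -> forall x, ip I x -> ip I (psmul q x)) ->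
  in_T H (ip I).
Proof.
move=> hq; split.
  exists (sub I), (@sact k H I); split; first exact: sub_module.
  move=> z; split.
    move=> hz; have := @in_trace_single k H (sub I) (@sact k H I) _ (MkSub hz) (@sv_hom k H I).
    by [].
  apply: trace_sub_in => //; [exact: ip0 | exact: ipadd].
exists (mono k c); split; first exact: hmono.
by exists c; rewrite /mono eqxx oner_eq0.
Qed.
End SubTrace.

Lemma down0 (k : fieldType) (f : ps k) : down 0 f = f.
Proof. by apply: functional_extensionality => n; rewrite /down addn0. Qed.

Section Main.
Variable k : fieldType.
Variable H : pred nat.
Hypothesis HH : numerical_semigroup H.
Variable a : nat -> nat.
Hypothesis Ha : enumerates H a.
Hypothesis Hn : conductor_index a 4.

Lemma inR_gap (x : ps k) j n : inR H x -> (a j < n)%N -> (n < a j.+1)%N -> x n = 0.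
Proof.
move=> hx h1 h2; apply/eqP; apply: contraT => /hx hn.
by move: (gapH Ha h1 h2); rewrite hn.
Qed.

Lemma I_mulq j (q x : ps k) : I_ideal H a j x -> inR H (psmul q x) -> I_ideal H a j (psmul q x).
Proof.
case=> hx hz hq; split => // m hm; apply: (@psmul_low _ _ _ 0 (a j)) => //.
Qed.

Definition Iid (j : nat) : idealp k H.
refine (@IdealP k H (I_ideal H a j) _ _ _ _ _).
- by split; [exact: inR_0 | move=> m _; rewrite /ps0].
- move=> x y [hx hx0] [hy hy0]; split; first exact: inR_add.
  by move=> m hm; rewrite /psadd hx0 ?hy0 ?addr0.
- move=> x [hx hx0]; split; first exact: inR_opp.
  by move=> m hm; rewrite /psopp hx0 ?oppr0.
- move=> r x hr hx; apply: I_mulq => //; apply: inR_mul => //; exact: (proj1 hx).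
- by move=> x [].
Defined.

Lemma mono_I j m : (j <= 4)%N -> (a 4 <= m)%N -> I_ideal H a j (mono k m).
Proof.
move=> hj hm; split.
  move=> n; rewrite /mono; case: (eqVneq n m) => [-> _|]; last by rewrite eqxx.
  exact: (Hge Ha Hn hm).
move=> n hn; rewrite /mono ifF //; apply/negP => /eqP e; subst n.
have := a_mono Ha hj; lia.
Qed.

Lemma Iid_in_T j : (j <= 4)%N -> in_T H (@I_ideal k H a j).
Proof.
move=> hj.
have := @in_T_sub k H HH (Iid j) (a 4) (hc0 Ha Hn) (hc1 Ha Hn) (fun m hm => mono_I hj hm).
apply => q hq x hx; exact: I_mulq hx (hq x hx).
Qed.

Section TraceM.
Variable M : zmodType.
Variable act : ps k -> M -> M.
Local Notation T := (in_trace H act).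

Lemma Tmul r x : T x -> inR H r -> T (psmul r x).
Proof.
move=> hx hr; rewrite -[psmul r x]down0; apply: trace_closure => //.
move=> y hy; split => //; rewrite down0; apply: inR_mul => //; exact: in_traceR hy.
Qed.

Lemma Tscale b x : T x -> T (psscale b x).
Proof.
move=> hx; have := Tmul hx (@inR_scale k H b _ (@inR_1 k H HH)).
by rewrite psmulZl psmul1l.
Qed.

Lemma Tshift j x : T x -> T (shift (a j) x).
Proof.
move=> hx; rewrite -psmul_mono; apply: Tmul => // n; rewrite /mono.
by case: (eqVneq n (a j)) => [-> _|]; [exact: (Hai Ha) | rewrite eqxx].
Qed.

Lemma T_ext x y : T x -> (forall n, x n = y n) -> T y.
Proof. by move=> hx e; have <- : x = y by apply: functional_extensionality. Qed.

Lemma Lstep j y : (j <= 3)%N -> (forall w, I_ideal H a j.+1 w -> T w) -> T y ->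
  (forall n, (n < a j)%N -> y n = 0) -> y (a j) != 0 ->
  forall w, I_ideal H a j w -> T w.
Proof.
move=> hj hI hy y0 ya w [hw w0].
pose b := w (a j) / y (a j).
have hy' : inR H y by exact: in_traceR hy.
apply: (@T_ext (psadd (psscale b y) (psadd w (psopp (psscale b y))))); last first.
  by move=> n; rewrite /psadd /psopp addrC subrK.
apply: in_trace_add; first exact: Tscale.
apply: hI; split.
  apply: inR_add => //; apply: inR_opp; exact: inR_scale.
move=> n hn; rewrite /psadd /psopp /psscale.
case: (ltngtP n (a j)) => h.
- by rewrite w0 // y0 // mulr0 oppr0 addr0.
- by rewrite (inR_gap hw h hn) (inR_gap hy' h hn) mulr0 oppr0 addr0.
- by rewrite h /b divfK // subrr.
Qed.

Lemma Cstep : (exists z, T z /\ exists n, z n != 0) ->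
  forall w, I_ideal H a 4 w -> T w.
Proof.
move=> [z0 [hz0 [n0 hn0]]].
have ex : exists n, exists z, T z /\ z n != 0 by exists n0, z0.
case: (ex_min ex) => p [[z [hz zp]] pmin].
have low : forall x, T x -> forall n, (n < p)%N -> x n = 0.
  move=> x hx n hn; apply/eqP; apply: contraT => hxn.
  by have := pmin n (ex_intro _ x (conj hx hxn)); rewrite leqNgt hn.
move=> w [hw w0].
pose u := down p z.
pose s := sol u (down (a 4) w).
have hu : u 0%N != 0 by rewrite /u /down add0n.
pose g := shift (a 4) s.
have hg : forall n, (n < a 4)%N -> g n = 0.
  by move=> n hn; rewrite /g /shift leqNgt hn.
have := @trace_closure k H M act g p _ z hz.
have -> : down p (psmul g z) = w.
  rewrite -(shift_down (low _ hz)) -/u psmul_shiftr /g psmul_shiftl down_shift.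
  rewrite psmulC /s sol_spec //.
  exact: shift_down.
apply => x hx; split.
  move=> n hn; apply: (@psmul_low _ _ _ (a 4) p) => //; first exact: low.
  lia.
move=> n; rewrite /down; case: (ltnP n (a 4)) => hn.
  rewrite (@psmul_low _ _ _ (a 4) p) ?eqxx //; [exact: low | lia].
by move=> _; exact: (Hge Ha Hn hn).
Qed.
End TraceM.
End Main.

Section Classif.
Variable k : fieldType.
Variable H : pred nat.
Hypothesis HH : numerical_semigroup H.
Variable a : nat -> nat.
Hypothesis Ha : enumerates H a.
Hypothesis Hn : conductor_index a 4.
Variable M : zmodType.
Variable act : ps k -> M -> M.
Local Notation T := (in_trace H act).
Definition TI j := forall z, T z -> forall n, (n < a j)%N -> z n = 0.

Lemma geom p : (1 <= p <= 2)%N -> TI p ->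
  (forall w, I_ideal H a p.+2 w -> T w) ->
  (a 4 <= a p.+2 + (a p.+1 - a p))%N ->
  forall y, T y -> y (a p) != 0 -> forall w, I_ideal H a p w -> T w.
Proof.
move=> hp TIp hI2 hlen y hy yp.
have apq : (a p < a p.+1)%N by apply: (a_lt Ha).
have aq4 : (a p.+1 < a 4)%N by apply: (a_lt Ha); lia.
case: (lem (exists z, T z /\ (forall n, (n < a p.+1)%N -> z n = 0) /\ z (a p.+1) != 0)).
  move=> [z [hz [z0 zq]]].
  have hp3 : (p.+1 <= 3)%N by lia.
  have hI1 := Lstep HH Ha hp3 hI2 hz z0 zq.
  have hp3' : (p <= 3)%N by lia.
  exact: (Lstep HH Ha hp3' hI1 hy (TIp _ hy) yp).
move=> hno; exfalso.
pose D := (a p.+1 - a p)%N.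
pose al := y (a p.+1) / y (a p).
have rel : forall z, T z -> z (a p.+1) = al * z (a p).
  move=> z hz.
  pose b := z (a p) / y (a p).
  pose z' := psadd z (psscale (- b) y).
  have hz' : T z' by apply: in_trace_add => //; exact: Tscale.
  have hzR := in_traceR hz; have hyR := in_traceR hy.
  have z'0 : forall n, (n < a p.+1)%N -> z' n = 0.
    move=> n hn; rewrite /z' /psadd /psscale.
    case: (ltngtP n (a p)) => h.
    - by rewrite TIp // (TIp _ hy) // mulr0 addr0.
    - by rewrite (inR_gap Ha hzR h hn) (inR_gap Ha hyR h hn) mulr0 addr0.
    - by rewrite h /b mulNr divfK // subrr.
  have : ~~ (z' (a p.+1) != 0) by apply/negP => hne; apply: hno; exists z'.
  rewrite negbK /z' /psadd /psscale mulNr subr_eq0 => /eqP ->.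
  by rewrite /b /al; ring.
pose u' := psadd (ps1 k) (psscale al (mono k D)).
have u'E : forall n, u' n = (if n == 0%N then 1 else 0) + al * (if n == D then 1 else 0).
  by [].
have hu' : u' 0%N != 0 by rewrite u'E eqxx (_ : (0 == D) = false) ?mulr0 ?addr0 ?oner_eq0 //; lia.
pose s := sol u' (ps1 k).
pose g := shift D s.
have key : forall x, T x -> forall n, (n < a 4)%N ->
    psmul g x n = x (a p) * (if n == a p.+1 then 1 else 0).
  move=> x hx n hn.
  have hxR := in_traceR hx.
  pose X1 := psscale (x (a p)) (shift (a p) u').
  pose r := psadd x (psopp X1).
  have ex : x = psadd X1 r.
    by apply: functional_extensionality => m; rewrite /r /psadd /psopp addrC subrK.
  rewrite [in LHS]ex.
  rewrite psmulDr {1}/psadd.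
  have -> : psmul g X1 = psscale (x (a p)) (mono k (a p.+1)).
    rewrite /X1 psmulZr psmul_shiftr /g psmul_shiftl psmulC /s sol_spec //.
    by rewrite shift_shift mono_shift addnC subnK // ltnW.
  rewrite (@psmul_low _ g r D (a p.+2)) ?addr0 //.
  - by move=> i hi; rewrite /g /shift; case: leqP => // h; exfalso; lia.
  - move=> m hm; rewrite /r /X1 /psadd /psopp /psscale /shift.
    case: (ltngtP m (a p)) => h1.
    + by rewrite TIp // mulr0 oppr0 addr0.
    + rewrite u'E.
      case: (ltngtP m (a p.+1)) => h2.
      * rewrite (inR_gap Ha hxR h1 h2) (_ : (m - a p == 0)%N = false); last lia.
        by rewrite (_ : (m - a p == D)%N = false) ?mulr0 ?addr0 ?mulr0 ?oppr0 ?addr0 //; lia.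
      * have h3 : (m < a p.+2)%N by [].
        rewrite (inR_gap Ha hxR h2 h3) (_ : (m - a p == 0)%N = false); last lia.
        by rewrite (_ : (m - a p == D)%N = false) ?mulr0 ?addr0 ?mulr0 ?oppr0 ?addr0 //; lia.
      * rewrite h2 (rel _ hx) (_ : (a p.+1 - a p == 0)%N = false); last lia.
        by rewrite eqxx add0r mulr1 mulrC subrr.
    + rewrite h1 subnn u'E eqxx (_ : (0 == D) = false); last lia.
      by rewrite mulr0 addr0 mulr1 subrr.
  - lia.
have := @trace_closure k H M act g 0 _ y hy; rewrite down0 => hgy.
have hgy' : T (psmul g y).
  apply: hgy => x hx; split => //; rewrite down0 => n.
  case: (ltnP n (a 4)) => hn.
    rewrite key //; case: (eqVneq n (a p.+1)) => [-> _| _]; first exact: (Hai Ha).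
    by rewrite mulr0 eqxx.
  by move=> _; exact: (Hge Ha Hn hn).
apply: hno; exists (psmul g y); split => //; split.
  move=> n hn; rewrite (key _ hy n); last lia.
  by rewrite (_ : (n == a p.+1) = false) ?mulr0 //; lia.
by rewrite (key _ hy) // eqxx mulr1.
Qed.
End Classif.

Section Steps.
Variable k : fieldType.
Variable H : pred nat.
Hypothesis HH : numerical_semigroup H.
Variable a : nat -> nat.
Hypothesis Ha : enumerates H a.
Hypothesis Hn : conductor_index a 4.
Hypothesis hcond : (a 4 - a 3 <= a 2 - a 1)%N.
Variable M : zmodType.
Variable act : ps k -> M -> M.
Local Notation T := (in_trace H act).
Hypothesis Tnz : exists z, T z /\ exists n, z n != 0.

Let C4 := Cstep Ha Hn Tnz.

Lemma shiftI j (y : ps k) : (forall n, (n < a j)%N -> shift (a j) y n = 0) /\ shift (a j) y (a j) = y 0%N.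
Proof.
split; first by move=> n hn; rewrite /shift leqNgt hn.
by rewrite /shift leqnn subnn.
Qed.

Lemma step0 y : T y -> y (a 0) != 0 -> forall w, I_ideal H a 0 w -> T w.
Proof.
rewrite (a0 HH Ha) => hy y0.
have HL j : (j <= 3)%N -> (forall w, I_ideal H a j.+1 w -> T w) -> forall w, I_ideal H a j w -> T w.
  move=> hj hI; have [s0 s1] := shiftI j y.
  apply: (Lstep HH Ha hj hI (Tshift HH Ha j hy) s0); by rewrite s1.
apply: (HL) => //; apply: (HL) => //; apply: (HL) => //; apply: (HL) => //.
Qed.

Lemma step1 : TI H a act 1 -> forall y, T y -> y (a 1) != 0 -> forall w, I_ideal H a 1 w -> T w.
Proof.
move=> TI1 y hy y1.
have a12 := a_lt Ha (ltnSn 1); have a23 := a_lt Ha (ltnSn 2).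
have a34 := a34 Ha Hn.
pose D := (a 3 - a 1)%N.
have hsh : T (shift D y).
  rewrite -psmul_mono -[psmul _ _]down0; apply: trace_closure => // x hx; split => //.
  rewrite down0 psmul_mono => n; rewrite /shift; case: leqP => hn //; last by rewrite eqxx.
  move=> hxn; have hxH := in_traceR hx hxn.
  have hge : (a 1 <= n - D)%N.
    rewrite leqNgt; apply/negP => hlt; move: hxn; by rewrite (TI1 _ hx _ hlt) eqxx.
  case: (Hcases HH Ha hxH) => [e|[e|[e|[e|e]]]].
  - have := a_lt Ha (ltn0Sn 0); rewrite (a0 HH Ha); lia.
  - have -> : n = a 3 by lia.
    exact: (Hai Ha).
  - apply: (Hge Ha Hn); lia.
  - apply: (Hge Ha Hn); lia.
  - apply: (Hge Ha Hn); lia.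
have I3 : forall w, I_ideal H a 3 w -> T w.
  apply: (Lstep HH Ha (j:=3) _ C4 hsh) => //.
    move=> n hn; rewrite /shift; case: leqP => h //; apply: TI1 => //; lia.
  by rewrite /shift ifT; [rewrite (_ : (a 3 - D = a 1)%N) //; lia | lia].
apply: (geom HH Ha Hn (p:=1) _ TI1 I3 _ hy y1) => //; lia.
Qed.

Lemma step2 : TI H a act 2 -> forall y, T y -> y (a 2) != 0 -> forall w, I_ideal H a 2 w -> T w.
Proof.
move=> TI2 y hy y2.
apply: (geom HH Ha Hn (p:=2) _ TI2 C4 _ hy y2) => //; lia.
Qed.

Lemma step3 : TI H a act 3 -> forall y, T y -> y (a 3) != 0 -> forall w, I_ideal H a 3 w -> T w.
Proof.
move=> TI3 y hy y3.
exact: (Lstep HH Ha (j:=3) _ C4 hy (TI3 _ hy) y3).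
Qed.

Lemma stepNone j : TI H a act j -> ~ (exists y, T y /\ y (a j) != 0) -> TI H a act j.+1.
Proof.
move=> TIj hno z hz n hn.
case: (ltngtP n (a j)) => h.
- exact: TIj.
- exact: (inR_gap Ha (in_traceR hz) h hn).
- apply/eqP; apply: contraT => hne; case: hno; exists z; split => //; by rewrite -h.
Qed.

Lemma classify : exists i, (i <= 4)%N /\ (forall w, I_ideal H a i w -> T w) /\ TI H a act i.
Proof.
have TI0 : TI H a act 0 by move=> z _ n; rewrite (a0 HH Ha).
case: (lem (exists y, T y /\ y (a 0) != 0)) => [[y [hy yn]]|n0].
  by exists 0%N; split => //; split => //; exact: (step0 hy yn).
have TI1 := stepNone TI0 n0.
case: (lem (exists y, T y /\ y (a 1) != 0)) => [[y [hy yn]]|n1].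
  by exists 1%N; split => //; split => //; exact: (step1 TI1 hy yn).
have TI2 := stepNone TI1 n1.
case: (lem (exists y, T y /\ y (a 2) != 0)) => [[y [hy yn]]|n2].
  by exists 2%N; split => //; split => //; exact: (step2 TI2 hy yn).
have TI3 := stepNone TI2 n2.
case: (lem (exists y, T y /\ y (a 3) != 0)) => [[y [hy yn]]|n3].
  by exists 3%N; split => //; split => //; exact: (step3 TI3 hy yn).
have TI4 := stepNone TI3 n3.
by exists 4%N; split => //; split => //; exact: C4.
Qed.
End Steps.

Lemma psmul_one (k : fieldType) (f g : ps k) n i1 : (i1 <= n)%N ->
  (forall i, (i <= n)%N -> i != i1 -> f i * g (n - i)%N = 0) ->
  psmul f g n = f i1 * g (n - i1)%N.
Proof.
move=> h1 hz; rewrite /psmul (bigD1 (Ordinal (h1 : (i1 < n.+1)%N))) //= big1 ?addr0 //.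
move=> i hi; apply: hz; first by rewrite -ltnS.
by apply: contra hi => /eqP e; apply/eqP; apply: val_inj.
Qed.

Lemma psmul_two (k : fieldType) (f g : ps k) n i1 i2 : (i1 < i2)%N -> (i2 <= n)%N ->
  (forall i, (i <= n)%N -> i != i1 -> i != i2 -> f i * g (n - i)%N = 0) ->
  psmul f g n = f i1 * g (n - i1)%N + f i2 * g (n - i2)%N.
Proof.
move=> h12 h2 hz.
have h1 : (i1 < n.+1)%N by lia.
rewrite /psmul (bigD1 (Ordinal h1)) //= (bigD1 (Ordinal (h2 : (i2 < n.+1)%N))) /=; last first.
  by apply/eqP => e; move: (congr1 val e) => /= e'; lia.
rewrite big1 ?addr0 //.
move=> i /andP [hi1 hi2]; apply: hz; first by rewrite -ltnS.
  by apply: contra hi1 => /eqP e; apply/eqP; apply: val_inj.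
by apply: contra hi2 => /eqP e; apply/eqP; apply: val_inj.
Qed.

Section Family.
Variable k : fieldType.
Variable H : pred nat.
Hypothesis HH : numerical_semigroup H.
Variable a : nat -> nat.
Hypothesis Ha : enumerates H a.
Hypothesis Hn : conductor_index a 4.
Hypothesis hlt : (a 2 - a 1 < a 4 - a 3)%N.

Let a01 := a_lt Ha (ltn0Sn 0).
Let a12 := a_lt Ha (ltnSn 1).
Let a23 := a_lt Ha (ltnSn 2).
Let a34 := a34 Ha Hn.
Let A0 := a0 HH Ha.

Lemma a13 : (a 4 <= a 1 + a 3)%N.
Proof.
have := Hcases HH Ha (Hadd HH (Hai Ha 1) (Hai Ha 3)).
move=> [e|[e|[e|[e|e]]]] //; lia.
Qed.

Definition Ilam (l : k) (z : ps k) : Prop := inR H z /\ z 0%N = 0 /\ z (a 2) = l * z (a 1).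

Lemma Ilam_low l x : Ilam l x -> forall n, (n < a 1)%N -> x n = 0.
Proof.
move=> [hx [x0 _]] n hn; case: (posnP n) => [->|hn0] //.
apply: (inR_gap Ha hx (j:=0)) => //; by rewrite A0.
Qed.

Lemma Ilam_mul l q x : q (a 2 - a 1)%N = 0 -> Ilam l x ->
  psmul q x 0%N = 0 /\ psmul q x (a 2) = l * psmul q x (a 1).
Proof.
move=> qd hx; have low := Ilam_low hx; case: hx => [hxR [x0 xl]].
split.
  by apply: (@psmul_low _ _ _ 0 (a 1)) => //; lia.
have e1 : psmul q x (a 1) = q 0%N * x (a 1).
  rewrite (@psmul_one _ _ _ _ 0) ?subn0 // => i hi hi0; rewrite low ?mulr0 //; lia.
have e2 : psmul q x (a 2) = q 0%N * x (a 2) + q (a 2 - a 1)%N * x (a 2 - (a 2 - a 1))%N.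
  rewrite (@psmul_two _ _ _ _ 0 (a 2 - a 1)%N) ?subn0 //; try lia.
  move=> i hi hi0 hid.
  case: (ltnP (a 2 - i) (a 1)) => h; first by rewrite low ?mulr0.
  rewrite (inR_gap Ha hxR (j:=1)) ?mulr0 //.
    rewrite ltn_neqAle h andbT; apply/eqP => e; move/eqP: hid; lia.
  have : (a 2 - i)%N != a 2 by move/eqP: hi0; lia.
  lia.
by rewrite e1 e2 qd mul0r addr0 xl; ring.
Qed.

Lemma d_notH : ~~ H (a 2 - a 1)%N.
Proof. apply: (gapH Ha (i:=0)); rewrite ?A0; have := a13; lia. Qed.

Definition IlamP (l : k) : idealp k H.
refine (@IdealP k H (Ilam l) _ _ _ _ _).
- split; first exact: inR_0.
  by rewrite /ps0 mulr0.
- move=> x y [hx [x0 xl]] [hy [y0 yl]]; split; first exact: inR_add.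
  by rewrite /psadd x0 y0 addr0 xl yl mulrDr.
- move=> x [hx [x0 xl]]; split; first exact: inR_opp.
  by rewrite /psopp x0 oppr0 xl mulrN.
- move=> r x hr hx.
  have qd : r (a 2 - a 1)%N = 0.
    by apply/eqP; apply: contraT => /hr h; move: d_notH; rewrite h.
  have [m0 m2] := Ilam_mul qd hx.
  split => //; apply: inR_mul => //; exact: (proj1 hx).
- by move=> x [].
Defined.

Lemma mono_Ilam l m : m = a 3 \/ (a 4 <= m)%N -> Ilam l (mono k m).
Proof.
move=> hm; split.
  move=> n; rewrite /mono; case: (eqVneq n m) => [-> _|]; last by rewrite eqxx.
  case: hm => [->|h]; [exact: (Hai Ha) | exact: (Hge Ha Hn)].
have hm3 : (a 3 <= m)%N by case: hm => [->|]; lia.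
rewrite /mono !ifF ?mulr0 //; apply/negP => /eqP e; lia.
Qed.
End Family.

Lemma distinct_seq (k : fieldType) : infinite_field k ->
  forall n, exists s : seq k, size s = n /\ uniq s.
Proof.
move=> Hk; elim=> [|n [s [hs us]]]; first by exists [::].
case: (Hk s) => x hx; exists (x :: s); split; first by rewrite /= hs.
by rewrite /= hx us.
Qed.

Section Fam2.
Variable k : fieldType.
Variable H : pred nat.
Hypothesis HH : numerical_semigroup H.
Variable a : nat -> nat.
Hypothesis Ha : enumerates H a.
Hypothesis Hn : conductor_index a 4.
Hypothesis hlt : (a 2 - a 1 < a 4 - a 3)%N.

Let a01 := a_lt Ha (ltn0Sn 0).
Let a12 := a_lt Ha (ltnSn 1).
Let a23 := a_lt Ha (ltnSn 2).
Let a34 := a34 Ha Hn.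
Let A0 := a0 HH Ha.

Lemma Ilam_in_T (l : k) : in_T H (Ilam H a l).
Proof.
have := @in_T_sub k H HH (IlamP HH Ha Hn hlt l) (a 4) (hc0 Ha Hn) (hc1 Ha Hn)
  (fun m hm => mono_Ilam HH Ha Hn hlt l (or_intror hm)).
apply => q hq x hx.
have qd : q (a 2 - a 1)%N = 0.
  have h3 := hq _ (mono_Ilam HH Ha Hn hlt l (or_introl erefl)).
  rewrite psmulC psmul_mono in h3.
  apply/eqP; apply: contraT => hne.
  have : shift (a 3) q (a 3 + (a 2 - a 1))%N != 0 by rewrite shift_coef.
  move/h3 => hH; move: (gapH Ha (i:=3) (n:=(a 3 + (a 2 - a 1))%N)); rewrite hH.
  by move=> /(_ _ _) /=; apply; lia.
have [m0 m2] := Ilam_mul HH Ha Hn hlt qd hx.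
by split => //; apply: hq.
Qed.

Definition zl (l : k) : ps k := psadd (mono k (a 1)) (psscale l (mono k (a 2))).

Lemma zl_in (l : k) : Ilam H a l (zl l).
Proof.
split.
  move=> n; rewrite /zl /psadd /psscale /mono.
  case: (eqVneq n (a 1)) => [-> _|_]; first exact: (Hai Ha).
  case: (eqVneq n (a 2)) => [-> _|_]; first exact: (Hai Ha).
  by rewrite mulr0 addr0 eqxx.
rewrite /zl /psadd /psscale /mono.
rewrite (_ : (0 == a 1)%N = false); last lia.
rewrite (_ : (0 == a 2)%N = false); last lia.
rewrite (_ : (a 2 == a 1)%N = false); last lia.
rewrite (_ : (a 1 == a 2)%N = false); last lia.
by rewrite !eqxx !mulr0 !addr0 add0r !mulr1.
Qed.

Lemma zl_eq (l m : k) : Ilam H a m (zl l) -> l = m.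
Proof.
move=> [_ [_ e]]; move: e; rewrite /zl /psadd /psscale /mono.
rewrite (_ : (a 2 == a 1)%N = false); last lia.
rewrite (_ : (a 1 == a 2)%N = false); last lia.
by rewrite !eqxx mulr0 addr0 add0r !mulr1.
Qed.

Lemma not_finite : infinite_field k -> ~ T_finite k H.
Proof.
move=> Hk [N [J hJ]].
have [s [hs us]] := distinct_seq Hk N.+1.
have spec : forall i : 'I_N.+1, exists j : 'I_N, same_ideal (Ilam H a (nth 0 s i)) (J j).
  move=> i; case: (hJ _ (Ilam_in_T (nth 0 s i))) => j [hj e].
  by exists (Ordinal hj).
pose phi (i : 'I_N.+1) := projT1 (cid (spec i)).
have inj : injective phi.
  move=> i i' e.
  have h1 := projT2 (cid (spec i)); have h2 := projT2 (cid (spec i')).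
  rewrite -/(phi i) in h1; rewrite -/(phi i') -e in h2.
  have := zl_in (nth 0 s i); rewrite h1 -h2 => /zl_eq.
  move/eqP; rewrite nth_uniq ?hs // => /eqP; exact: val_inj.
have := leq_card phi inj; rewrite !card_ord; lia.
Qed.
End Fam2.

Lemma cond_TeqI (k : fieldType) (H : pred nat) (HH : numerical_semigroup H)
  (a : nat -> nat) (Ha : enumerates H a) (Hn : conductor_index a 4) :
  (a 4 - a 3 <= a 2 - a 1)%N -> T_eq_I k H a 4.
Proof.
move=> hcond; split; last by move=> i hi; exact: (Iid_in_T k HH Ha Hn hi).
move=> I [[M [act [hmod hI]]] [z [hz [n hn]]]].
have Tnz : exists z, in_trace H act z /\ exists n, z n != 0.
  by exists z; split; [apply/hI | exists n].
have [i [hi [hsub TIi]]] := classify HH Ha Hn hcond Tnz.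
exists i; split => // w; split.
  move/hI => hw; split; first exact: in_traceR hw.
  exact: TIi.
by move/hsub/hI.
Qed.

Lemma TeqI_fin (k : fieldType) (H : pred nat) (a : nat -> nat) :
  T_eq_I k H a 4 -> T_finite k H.
Proof.
move=> [h _]; exists 5%N, (fun i => @I_ideal k H a i) => I hI.
by have [i [hi e]] := h I hI; exists i; split.
Qed.

Lemma fin_cond (k : fieldType) (Hk : infinite_field k) (H : pred nat) (HH : numerical_semigroup H)
  (a : nat -> nat) (Ha : enumerates H a) (Hn : conductor_index a 4) :
  T_finite k H -> (a 4 - a 3 <= a 2 - a 1)%N.
Proof.
move=> hf; rewrite leqNgt; apply/negP => hlt.
exact: (not_finite HH Ha Hn hlt Hk hf).
Qed.

Theorem corollary4p2 (k : fieldType) (Hk : infinite_field k)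
  (H : pred nat) (HH : numerical_semigroup H)
  (a : nat -> nat) (Ha : enumerates H a) (Hn : conductor_index a 4) :
  [<-> T_finite k H; T_eq_I k H a 4; (a 4 - a 3 <= a 2 - a 1)%N].
Proof.
split; [|split].
- by move=> hf; apply: (@cond_TeqI k H HH a Ha Hn); exact: (fin_cond Hk HH Ha Hn hf).
- by move=> he; exact: (fin_cond Hk HH Ha Hn (TeqI_fin he)).
- by move=> hc; exact: (TeqI_fin (@cond_TeqI k H HH a Ha Hn hc)).
Qed.
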